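(* Let $f$ be a finite extension of a field $k$ with $[f:k]=n$, and suppose that $f$ is regular. Then $\bar f=F\times(\bar f\cap\bar k^{1/n})$ for some countable free abelian subgroup $F$ of $\bar f$, where $\bar f\cap\bar k^{1/n}=\{x\in\bar f:\ x^n\in\bar k\}$.
   Context: A field is called regular if it is countable and its multiplicative group is a direct product of a torsion group and a free abelian group. For a field $k$, the reduced multiplicative group is $\bar k=k^*/t(k^* )$, where $t(k^* )$ is the group of roots of unity in $k$. When $k\le f$, $\bar k$ is identified with its image $k^*t(f^* )/t(f^* )$ in $\bar f$ (the natural map is injective since $t(k^* )=k^*\cap t(f^* )$). *)

(* Defs.v *)
From HB Require Import structures.
From mathcomp Require Import all_boot all_order all_algebra all_field.
Set Implicit Arguments. Unset Strict Implicit. Unset Printing Implicit Defensive.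
Import Order.TTheory GRing.Theory Num.Theory.
Local Open Scope ring_scope.

(* Subsets of a field are predicates L -> Prop.  The reduced multiplicative
   group  fbar = L^x / t(L^x)  is handled through preimages: a subgroup of
   fbar is the same as a subgroup of f^* containing t(L^x). *)

Definition is_root_of_unity (L : fieldType) (x : L) : Prop :=
  exists m : nat, (0 < m)%N /\ x ^+ m = 1.

Definition mult_subgroup (L : fieldType) (G : L -> Prop) : Prop :=
  G 1 /\ (forall x, G x -> x != 0) /\
  (forall x y, G x -> G y -> G (x * y)) /\ (forall x, G x -> G x^-1).

(* G/T is a free abelian group (T a subgroup of G): there is a set B of
   elements of G whose classes form a basis of G/T, i.e. every element of G
   is, modulo T, a finite product of integer powers of distinct elements of B,
   and the only such product lying in T is the trivial one. *)
Definition free_mod (L : fieldType) (T G : L -> Prop) : Prop :=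
  exists B : L -> Prop,
    (forall b, B b -> G b) /\
    (forall x, G x -> exists s : seq (L * int),
        (forall p, p \in s -> B p.1) /\
        T (x / \prod_(p <- s) p.1 ^ p.2)) /\
    (forall s : seq (L * int),
        (forall p, p \in s -> B p.1) -> uniq (map fst s) ->
        T (\prod_(p <- s) p.1 ^ p.2) -> forall p, p \in s -> p.2 = 0).

Definition countable_set (L : Type) (A : L -> Prop) : Prop :=
  exists g : L -> nat, forall x y, A x -> A y -> g x = g y -> x = y.

Definition regular_field (L : fieldType) : Prop :=
  countable_set (fun _ : L => True) /\
  exists G : L -> Prop,
    mult_subgroup G /\
    (forall x, G x -> is_root_of_unity x -> x = 1) /\
    (forall x, x != 0 -> exists y z, G y /\ is_root_of_unity z /\ x = y * z) /\
    free_mod (fun x => x = 1) G.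

(* preimage in L^x of  fbar ∩ kbar^{1/n} = {x in fbar : x^n in kbar},
   where kbar = k^x t(L^x) / t(L^x) *)
Definition kbar_root (F : fieldType) (L : fieldExtType F) (n : nat) (x : L)
  : Prop :=
  x != 0 /\ exists (a : F) (z : L),
    a != 0 /\ is_root_of_unity z /\ x ^+ n = a%:A * z.

(* Main.v *)
Require Import Defs.
From HB Require Import structures.
From mathcomp Require Import all_boot all_order all_algebra all_field.
From mathcomp Require Import ring.
From Stdlib Require Import ClassicalEpsilon.
Import GRing.Theory.
Local Open Scope ring_scope.
Import VectorInternalTheory.
Set Implicit Arguments. Unset Strict Implicit. Unset Printing Implicit Defensive.

Section BigGen.
Variables (R : Type) (idx : R) (op : Monoid.com_law idx).
Variables (T A : eqType).

Lemma big_pick (u : seq T) a (P : pred T) (G : R) :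
  uniq u -> a \in u ->
  \big[op/idx]_(x <- u | P x) (if a == x then G else idx) = if P a then G else idx.
Proof.
elim: u => // x u IH /= /andP[xnu uu]; rewrite inE big_cons.
case: (eqVneq a x) => [ax _ | ne /= au]; first subst x.
  rewrite big1_seq ?Monoid.mulm1; first by case: (P a).
  move=> y /andP[_ yu]; case: (eqVneq a y) => // ay.
  by move: xnu; rewrite ay yu.
by rewrite IH //; case: (P x); rewrite ?Monoid.mul1m.
Qed.

Lemma big_part (s : seq (T * A)) (Q : pred T) (F : T * A -> R) :
  \big[op/idx]_(p <- s | Q p.1) F p =
  \big[op/idx]_(x <- undup (map fst s) | Q x)
     \big[op/idx]_(p <- s | p.1 == x) F p.
Proof.
rewrite [RHS](eq_bigr (fun x => \big[op/idx]_(p <- s) (if p.1 == x then F p else idx)));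
  last by move=> x _; rewrite big_mkcond.
rewrite exchange_big /= [LHS]big_mkcond.
symmetry; apply: eq_big_seq => p ps; rewrite big_pick ?undup_uniq //.
by rewrite mem_undup; apply: map_f.
Qed.
End BigGen.

Lemma sum_uniq (T : eqType) (s : seq (T * int)) p0 :
  uniq (map fst s) -> p0 \in s -> \sum_(p <- s | p.1 == p0.1) p.2 = p0.2.
Proof.
elim: s => // q s IH /= /andP[qns us]; rewrite inE big_cons.
case/orP => [/eqP E | p0s].
  subst p0; rewrite (_ : (q.1 == q.1) = true); last by apply/eqP.
  rewrite big1_seq ?addr0 // => p /andP[/eqP e ps].
  by move: qns; rewrite -e (map_f fst ps).
rewrite IH //; case: (eqVneq q.1 p0.1) => // e.
by move: qns; rewrite e (map_f fst p0s).
Qed.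

Section Norm.
Variables (F : fieldType) (L : fieldExtType F).

Definition Mx (x : L) : 'M[F]_(dim L) := f2mx (amulr x).
Definition Nm (x : L) : F := \det (Mx x).

Lemma MxE x v : v2r (v * x) = v2r v *m Mx x.
Proof.
have -> : v * x = amulr x v by rewrite lfunE.
by rewrite [in LHS]unlock /= r2vK.
Qed.

Lemma mx_ext m (A B : 'M[F]_(dim L, m)) :
  (forall v : L, v2r v *m A = v2r v *m B) -> A = B.
Proof.
move=> h; apply/row_matrixP => i; rewrite !rowE.
by have := h (r2v (delta_mx 0 i)); rewrite r2vK.
Qed.

Lemma MxM x y : Mx (x * y) = Mx x *m Mx y.
Proof. by apply: mx_ext => v; rewrite -MxE mulrA MxE MxE mulmxA. Qed.

Lemma MxA a : Mx (a%:A) = a%:M.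
Proof. by apply: mx_ext => v; rewrite -MxE mulr_algr linearZ /= mul_mx_scalar. Qed.

Lemma NmM x y : Nm (x * y) = Nm x * Nm y.
Proof. by rewrite /Nm MxM det_mulmx. Qed.

Lemma NmA a : Nm (a%:A) = a ^+ \dim {:L}.
Proof. by rewrite /Nm MxA det_scalar dimvf. Qed.

Lemma Nm1 : Nm 1 = 1.
Proof. by rewrite -(scale1r (1 : L)) NmA expr1n. Qed.

Lemma NmX x m : Nm (x ^+ m) = Nm x ^+ m.
Proof. by elim: m => [|m IH]; rewrite ?Nm1 // !exprS NmM IH. Qed.

Lemma Nm_neq0 x : x != 0 -> Nm x != 0.
Proof.
move=> nz; apply/eqP => h; have := NmM x x^-1; rewrite divff // Nm1 h mul0r.
by move/eqP; rewrite oner_eq0.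
Qed.

Lemma dim_gt0 : (0 < \dim {:L})%N.
Proof. exact: adim_gt0. Qed.
End Norm.

Section Roots.
Variable (L : fieldType).
Notation T := (@is_root_of_unity L).

Lemma T1 : T 1.
Proof. by exists 1%N; rewrite expr1. Qed.

Lemma T_nz x : T x -> x != 0.
Proof.
case=> m [m0 e]; apply/eqP => x0; move: e; rewrite x0 expr0n.
by case: m m0 => // m _ /eqP; rewrite eq_sym oner_eq0.
Qed.

Lemma T_mul x y : T x -> T y -> T (x * y).
Proof.
case=> m [m0 e] [k [k0 f]]; exists (m * k)%N; split; first by rewrite muln_gt0 m0.
by rewrite exprMn exprM e expr1n -mulnC exprM f expr1n mulr1.
Qed.

Lemma T_inv x : T x -> T x^-1.
Proof. by case=> m [m0 e]; exists m; split => //; rewrite exprVn e invr1. Qed.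

Lemma T_X x m : T x -> T (x ^+ m).
Proof.
move=> Tx; elim: m => [|m IH]; first by rewrite expr0; apply: T1.
by rewrite exprS; apply: T_mul.
Qed.

Lemma T_div x y : T x -> T y -> T (x / y).
Proof. by move=> Tx Ty; apply: T_mul => //; apply: T_inv. Qed.

Definition prodz (s : seq (L * int)) : L := \prod_(p <- s) p.1 ^ p.2.

Lemma prodz_nz s : (forall p, p \in s -> p.1 != 0) -> prodz s != 0.
Proof.
move=> h; rewrite /prodz prodf_seq_neq0; apply/allP => p ps /=.
by apply: expfz_neq0; apply: h.
Qed.

Lemma prodz_cat s t : prodz (s ++ t) = prodz s * prodz t.
Proof. by rewrite /prodz big_cat. Qed.

Lemma prodz_neg s :
  prodz [seq (p.1, - p.2) | p <- s] = (prodz s)^-1.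
Proof.
rewrite /prodz big_map -prodfV; apply: eq_bigr => p _ /=.
by rewrite invr_expz.
Qed.

Lemma prodz_merge s : (forall p, p \in s -> p.1 != 0) ->
  prodz s = \prod_(x <- undup (map fst s)) x ^ (\sum_(p <- s | p.1 == x) p.2).
Proof.
move=> nz; rewrite /prodz (@big_part _ _ _ _ _ s predT) /=.
apply: eq_big_seq => x; rewrite mem_undup => /mapP[q qs ->].
rewrite (eq_bigr (fun p => q.1 ^ p.2)); last by move=> p /eqP ->.
rewrite (big_morph (fun e : int => q.1 ^ e) (fun a b => expfzDr a b (nz q qs)) (expr0z _)).
by [].
Qed.
End Roots.

Section Coord.
Variables (L : fieldType) (g : L -> nat) (B : L -> Prop).
Notation T := (@is_root_of_unity L).
Hypothesis hg : injective g.
Hypothesis hBnz : forall b, B b -> b != 0.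
Hypothesis hspan : forall y, y != 0 ->
  exists s, (forall p, p \in s -> B p.1) /\ T (y / prodz s).
Hypothesis hind : forall s, (forall p, p \in s -> B p.1) -> uniq (map fst s) ->
  T (prodz s) -> forall p, p \in s -> p.2 = 0.

Lemma Bnz (s : seq (L * int)) : (forall p, p \in s -> B p.1) -> forall p, p \in s -> p.1 != 0.
Proof. by move=> h p ps; apply: hBnz; apply: h. Qed.

Lemma indepL (s : seq (L * int)) : (forall p, p \in s -> B p.1) -> T (prodz s) ->
  forall x, \sum_(p <- s | p.1 == x) p.2 = 0.
Proof.
move=> Bs Ts x.
set u := undup (map fst s).
set e := fun y => \sum_(p <- s | p.1 == y) p.2.
set s2 := [seq (y, e y) | y <- u].
have fs2 : map fst s2 = u by rewrite /s2 -map_comp map_id.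
have Bs2 : forall p, p \in s2 -> B p.1.
  move=> p /mapP[y yu ->] /=; move: yu; rewrite mem_undup => /mapP[q qs ->].
  exact: Bs.
have P2 : prodz s2 = prodz s.
  by rewrite (prodz_merge (Bnz Bs)) /prodz big_map.
have u2 : uniq (map fst s2) by rewrite fs2 undup_uniq.
have T2 : T (prodz s2) by rewrite P2.
have h := hind Bs2 u2 T2.
case xu: (x \in u).
  by have := h (x, e x) (map_f _ xu).
rewrite big1_seq // => p /andP[/eqP px ps].
by move: xu; rewrite /u mem_undup -px (map_f fst ps).
Qed.

Definition cc (s : seq (L * int)) (k : nat) : int := \sum_(p <- s | g p.1 == k) p.2.

Lemma ccL s x : cc s (g x) = \sum_(p <- s | p.1 == x) p.2.
Proof. by apply: eq_bigl => p; rewrite inj_eq. Qed.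

Lemma cc0 (s : seq (L * int)) : (forall p, p \in s -> B p.1) -> T (prodz s) -> forall k, cc s k = 0.
Proof.
move=> Bs Ts k; case: (@hasP _ (fun p : L * int => g p.1 == k) s) => [[p0 _ /eqP <-] | nh].
  by rewrite ccL (indepL Bs Ts).
rewrite /cc big1_seq // => p /andP[e ps]; case: nh; by exists p.
Qed.

Lemma cc_cat s t k : cc (s ++ t) k = cc s k + cc t k.
Proof. by rewrite /cc big_cat. Qed.

Lemma cc_neg s k : cc [seq (p.1, - p.2) | p <- s] k = - cc s k.
Proof. by rewrite /cc big_map sumrN. Qed.

Definition Rep y s := (forall p, p \in s -> B p.1) /\ T (y / prodz s).
Definition rep y := epsilon (inhabits [::]) (Rep y).
Definition c y k := cc (rep y) k.

Lemma rep_spec y : y != 0 -> Rep y (rep y).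
Proof. by move=> nz; apply: epsilon_spec; apply: hspan. Qed.

Lemma Rep_unique y s t : y != 0 -> Rep y s -> Rep y t -> forall k, cc s k = cc t k.
Proof.
move=> nz [Bs Ts] [Bt Tt] k.
set u := s ++ [seq (p.1, - p.2) | p <- t].
have Bu : forall p, p \in u -> B p.1.
  move=> p; rewrite mem_cat => /orP[ps|/mapP[q qt ->]]; [exact: Bs | exact: (Bt q qt)].
have Pu : T (prodz u).
  have nzs := prodz_nz (Bnz Bs); have nzt := prodz_nz (Bnz Bt).
  rewrite prodz_cat prodz_neg.
  have -> : prodz s * (prodz t)^-1 = (y / prodz t) / (y / prodz s).
    by field; rewrite nz nzs nzt.
  exact: T_div.
have := cc0 Bu Pu k; rewrite cc_cat cc_neg => /eqP; rewrite subr_eq0 => /eqP.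
by [].
Qed.

Lemma Rep1 : Rep 1 [::].
Proof. by split => //; rewrite /prodz big_nil divr1; apply: T1. Qed.

Lemma c_mul x y : x != 0 -> y != 0 -> forall k, c (x * y) k = c x k + c y k.
Proof.
move=> nx ny k; have [Bx Tx] := rep_spec nx; have [By Ty] := rep_spec ny.
have nxy : x * y != 0 by rewrite mulf_neq0.
have R : Rep (x * y) (rep x ++ rep y).
  split.
    by move=> p; rewrite mem_cat => /orP[]; [apply: Bx | apply: By].
  rewrite prodz_cat.
  have -> : x * y / (prodz (rep x) * prodz (rep y)) =
            (x / prodz (rep x)) * (y / prodz (rep y)).
    by rewrite invfM mulrACA.
  exact: T_mul.
by rewrite /c (Rep_unique nxy (rep_spec nxy) R) cc_cat.
Qed.

Lemma c_T y : T y -> forall k, c y k = 0.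
Proof.
move=> Ty k; have ny := T_nz Ty.
have R : Rep y [::] by split => //; rewrite /prodz big_nil divr1.
by rewrite /c (Rep_unique ny (rep_spec ny) R) /cc big_nil.
Qed.

Lemma c_zero_T y : y != 0 -> (forall k, c y k = 0) -> T y.
Proof.
move=> ny h; have [By Ty] := rep_spec ny.
suff P1 : prodz (rep y) = 1 by rewrite P1 divr1 in Ty.
rewrite (prodz_merge (Bnz By)) big1_seq // => x _.
by rewrite -ccL; have := h (g x); rewrite /c => ->; rewrite expr0z.
Qed.

Lemma c_supp y : exists N, forall k, (N <= k)%N -> c y k = 0.
Proof.
exists (\max_(p <- rep y) g p.1).+1 => k Nk; rewrite /c /cc big1_seq //.
move=> p /andP[/eqP e ps]; move: Nk; rewrite -e => Nk.
have H : (g p.1 <= \max_(q <- rep y) g q.1)%N.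
  by apply: (@leq_bigmax_seq _ _ xpredT (fun q : L * int => g q.1)).
by move: (leq_trans Nk H); rewrite ltnn.
Qed.
End Coord.

Section Core.
Import Num.Theory.
Variables (L : fieldType) (v : L -> nat -> int).
Hypothesis hv_mul : forall x y, x != 0 -> y != 0 ->
  forall k, v (x * y) k = v x k + v y k.
Hypothesis hv_supp : forall x, exists N, forall k, (N <= k)%N -> v x k = 0.

Lemma v1 k : v 1 k = 0.
Proof.
have := hv_mul (oner_neq0 L) (oner_neq0 L) k; rewrite mulr1.
by rewrite -{1}(addr0 (v 1 k)) => /addrI <-.
Qed.

Lemma v_inv x k : x != 0 -> v x^-1 k = - v x k.
Proof.
move=> nx; have := hv_mul nx (invr_neq0 nx) k; rewrite divff // v1.
by move/eqP; rewrite eq_sym addrC addr_eq0 => /eqP.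
Qed.

Lemma v_expn x n k : x != 0 -> v (x ^+ n) k = n%:Z * v x k.
Proof.
move=> nx; elim: n => [|n IH]; first by rewrite expr0 v1 mul0r.
rewrite exprS hv_mul ?expf_neq0 // IH.
by rewrite -addn1 PoszD mulrDl mul1r addrC.
Qed.

Lemma v_expz x z k : x != 0 -> v (x ^ z) k = z * v x k.
Proof.
move=> nx; case: z => n; first exact: v_expn.
rewrite (_ : x ^ Negz n = (x ^+ n.+1)^-1) // v_inv ?expf_neq0 // v_expn //.
by rewrite NegzE mulNr.
Qed.

Lemma v_prodz (s : seq (L * int)) k : (forall p, p \in s -> p.1 != 0) ->
  v (prodz s) k = \sum_(p <- s) p.2 * v p.1 k.
Proof.
elim: s => [|p s IH] nz; first by rewrite /prodz !big_nil v1.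
have nzs : forall q, q \in s -> q.1 != 0 by move=> q qs; apply: nz; rewrite inE qs orbT.
have np : p.1 != 0 by apply: nz; rewrite inE eqxx.
rewrite /prodz big_cons big_cons hv_mul ?expfz_neq0 //; last exact: prodz_nz.
by rewrite v_expz // -/(prodz s) IH.
Qed.

Definition ok N x := x != 0 /\ forall k, (N < k)%N -> v x k = 0.
Definition D N (a : int) := exists x, ok N x /\ v x N = a.
Definition hasD N := exists m : nat, (0 < m)%N /\ D N m.
Definition pb (P : Prop) : bool := if excluded_middle_informative P then true else false.
Lemma pbP P : pb P <-> P.
Proof. by rewrite /pb; case: excluded_middle_informative. Qed.

Definition Pm N := fun m : nat => pb ((0 < m)%N /\ D N m).
Lemma hasD' N : hasD N -> exists m, Pm N m.
Proof. by case=> m h; exists m; apply/pbP. Qed.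

Definition dmin N : nat :=
  match excluded_middle_informative (hasD N) with
  | left h => ex_minn (hasD' h)
  | right _ => 0%N end.

Lemma dmin_spec N : hasD N ->
  [/\ (0 < dmin N)%N, D N (dmin N) & forall m, (0 < m)%N -> D N m -> (dmin N <= m)%N].
Proof.
rewrite /dmin; case: excluded_middle_informative => // h _.
case: ex_minnP => m /pbP [m0 Dm] mmin; split => // k k0 Dk.
by apply: mmin; apply/pbP.
Qed.

Definition xN N := epsilon (inhabits 1) (fun x => ok N x /\ v x N = dmin N).

Lemma xN_spec N : hasD N -> ok N (xN N) /\ v (xN N) N = dmin N.
Proof.
move=> h; apply: (epsilon_spec (inhabits 1) (fun x => ok N x /\ v x N = dmin N)).
have [_ [x [ox vx]] _] := dmin_spec h.
by exists x.
Qed.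

Lemma ok_mul N x y : ok N x -> ok N y -> ok N (x * y).
Proof.
move=> [nx hx] [ny hy]; split; first by rewrite mulf_neq0.
by move=> k Nk; rewrite hv_mul // hx // hy.
Qed.

Lemma ok_expz N x z : ok N x -> ok N (x ^ z).
Proof.
move=> [nx hx]; split; first exact: expfz_neq0.
by move=> k Nk; rewrite v_expz // hx // mulr0.
Qed.

Lemma div_step N y : ok N y -> hasD N -> exists q : int, v y N = q * (dmin N)%:Z.
Proof.
move=> oy h; have [d0 _ dmn] := dmin_spec h; have [ox vx] := xN_spec h.
set d := dmin N in d0 dmn vx *; set m := v y N.
exists (m %/ d)%Z.
set y' := y * xN N ^ (- (m %/ d)%Z).
have oy' : ok N y' by apply: ok_mul => //; apply: ok_expz.
have vy' : v y' N = (m %% d)%Z.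
  have nx : xN N != 0 by case: ox.
  have ny : y != 0 by case: oy.
  rewrite /y' hv_mul ?expfz_neq0 // v_expz // vx mulNr -/m.
  by rewrite {1}(divz_eq m d) addrAC subrr add0r.
have r0 : 0 <= (m %% d)%Z by apply: modz_ge0; rewrite eqz_nat -lt0n.
have rd : (m %% d)%Z < d by apply: ltz_pmod; rewrite ltz_nat.
case: (eqVneq (m %% d)%Z 0) => [e | ne].
  by rewrite {1}(divz_eq m d) e addr0.
exfalso; move: r0 rd ne vy'; case: (m %% d)%Z => // r _ rd ne vy'.
have r0 : (0 < r)%N by rewrite lt0n; apply: contra ne => /eqP ->.
have := dmn r r0 (ex_intro _ y' (conj oy' vy')).
by rewrite leqNgt -ltz_nat rd.
Qed.

Lemma noD N y : ok N y -> ~ hasD N -> v y N = 0.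
Proof.
move=> [ny hy] nh; case: (ltrgtP 0 (v y N)) => // [pos | neg].
  exfalso; apply: nh; move: pos; case e: (v y N) => [m|//] pos.
  by exists m; split => //; exists y; split.
exfalso; apply: nh; have e : v y^-1 N = - v y N by rewrite v_inv.
move: neg; rewrite -oppr_gt0 -e; case e2: (v y^-1 N) => [m|//] pos.
exists m; split => //; exists y^-1; split => //; split; first by rewrite invr_eq0.
by move=> k Nk; rewrite v_inv // hy // oppr0.
Qed.

Definition X x := exists M, hasD M /\ x = xN M.

Lemma X_nz x : X x -> x != 0.
Proof. by case=> M [h ->]; have [[]] := xN_spec h. Qed.

Lemma span_core N y : y != 0 -> (forall k, (N <= k)%N -> v y k = 0) ->
  exists s : seq (L * int), (forall p, p \in s -> X p.1) /\
     forall k, v y k = \sum_(p <- s) p.2 * v p.1 k.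
Proof.
elim: N y => [|N IH] y ny hy.
  by exists [::]; split => // k; rewrite big_nil hy.
have oy : ok N y by split => // k Nk; apply: hy.
case: (excluded_middle_informative (hasD N)) => h; last first.
  apply: IH => // k; rewrite leq_eqVlt => /orP[/eqP <-|]; first exact: noD.
  exact: hy.
have [q e] := div_step oy h; have [ox vx] := xN_spec h.
have nx : xN N != 0 by case: ox.
set y' := y * xN N ^ (- q).
have ny' : y' != 0 by rewrite mulf_neq0 ?expfz_neq0.
have vy' : forall k, v y' k = v y k - q * v (xN N) k.
  by move=> k; rewrite /y' hv_mul ?expfz_neq0 // v_expz // mulNr.
have [s [Xs hs]] : exists s : seq (L * int), (forall p, p \in s -> X p.1) /\
     forall k, v y' k = \sum_(p <- s) p.2 * v p.1 k.
  apply: IH => // k; rewrite leq_eqVlt => /orP[/eqP <-|Nk].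
    by rewrite vy' vx e subrr.
  by rewrite vy' hy // (proj2 ox) // mulr0 subr0.
exists ((xN N, q) :: s); split.
  by move=> p; rewrite inE => /orP[/eqP -> | ]; [exists N | apply: Xs].
by move=> k; rewrite big_cons -hs vy' /= addrC subrK.
Qed.

Lemma span_all y : y != 0 -> exists s : seq (L * int), (forall p, p \in s -> X p.1) /\
     forall k, v y k = \sum_(p <- s) p.2 * v p.1 k.
Proof. by move=> ny; have [N hN] := hv_supp y; exact: (span_core ny hN). Qed.

Lemma indep_core N (s : seq (L * int)) :
  (forall p, p \in s -> exists M, (M < N)%N /\ hasD M /\ p.1 = xN M) ->
  (forall k, \sum_(p <- s) p.2 * v p.1 k = 0) ->
  forall x, \sum_(p <- s | p.1 == x) p.2 = 0.
Proof.
elim: N s => [|N IH] s hs h0 x.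
  by rewrite big1_seq // => p /andP[_ /hs] [M []].
case: (excluded_middle_informative (hasD N)) => hN; last first.
  apply: IH => // p /hs [M [MN [hM e]]]; exists M; split => //.
  move: MN; rewrite ltnS leq_eqVlt => /orP[/eqP EM|//]; by subst M.
have [[nxn oxn] vxn] := xN_spec hN; have [d0 _ _] := dmin_spec hN.
set xn := xN N in nxn oxn vxn *.
set E := \sum_(p <- s | p.1 == xn) p.2.
have lowM : forall p, p \in s -> p.1 != xn ->
    exists M, (M < N)%N /\ hasD M /\ p.1 = xN M.
  move=> p ps ne; have [M [MN [hM e]]] := hs p ps; exists M; split => //.
  move: MN; rewrite ltnS leq_eqVlt => /orP[/eqP EM|//]; subst M.
  by rewrite e eqxx in ne.
have coordN : \sum_(p <- s) p.2 * v p.1 N = E * (dmin N)%:Z.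
  rewrite /E mulr_suml [RHS]big_mkcond; apply: eq_big_seq => p ps /=.
  case: (eqVneq p.1 xn) => [-> | ne]; first by rewrite vxn.
  have [M [MN [hM e]]] := lowM p ps ne; have [[_ oM] _] := xN_spec hM.
  by rewrite e oM // mulr0.
have E0 : E = 0.
  move: (h0 N); rewrite coordN => /eqP; rewrite mulf_eq0 => /orP[/eqP //|].
  by rewrite eqz_nat eqn0Ngt d0.
set s' := [seq p <- s | p.1 != xn].
have hs' : forall p, p \in s' -> exists M, (M < N)%N /\ hasD M /\ p.1 = xN M.
  by move=> p; rewrite mem_filter => /andP[ne ps]; apply: lowM.
have h0' : forall k, \sum_(p <- s') p.2 * v p.1 k = 0.
  move=> k; rewrite big_filter; move: (h0 k).
  rewrite (bigID (fun p => p.1 == xn)) /=.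
  rewrite (eq_bigr (fun p => p.2 * v xn k)); last by move=> p /eqP ->.
  by rewrite -mulr_suml -/E E0 mul0r add0r.
have := IH s' hs' h0'.
case: (eqVneq x xn) => [-> _ // | nex].
move=> /(_ x) H; rewrite -[RHS]H big_filter_cond; apply: eq_bigl => p.
case: (eqVneq p.1 x) => [-> | ]; by rewrite ?nex ?andbF.
Qed.

Lemma bound (s : seq (L * int)) : (forall p, p \in s -> X p.1) ->
  exists N, forall p, p \in s -> exists M, (M < N)%N /\ hasD M /\ p.1 = xN M.
Proof.
elim: s => [|q s IH] hs; first by exists 0%N.
have hs' : forall p, p \in s -> X p.1 by move=> p ps; apply: hs; rewrite inE ps orbT.
have [N hN] := IH hs'.
have [M [hM e]] := hs q (mem_head _ _).
exists (maxn N M.+1) => p; rewrite inE => /orP[/eqP -> | ps].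
  by exists M; split => //; rewrite leq_max leqnn orbT.
have [M' [M'N [hM' e']]] := hN p ps; exists M'; split => //.
by rewrite leq_max M'N.
Qed.

Lemma indep_all (s : seq (L * int)) : (forall p, p \in s -> X p.1) ->
  (forall k, \sum_(p <- s) p.2 * v p.1 k = 0) ->
  forall x, \sum_(p <- s | p.1 == x) p.2 = 0.
Proof. by move=> hs; have [N hN] := bound hs; apply: indep_core hN. Qed.
End Core.

Section Psi.
Variables (F : fieldType) (L : fieldExtType F).
Notation T := (@is_root_of_unity L).
Notation n := (\dim {:L}).

Definition psi (x : L) : L := x ^+ n / (Nm x)%:A.

Lemma alg_nz (a : F) : a != 0 -> a%:A != 0 :> L.
Proof. by move=> a0; rewrite scaler_eq0 negb_or a0 oner_neq0. Qed.

Lemma algM (a b : F) : (a * b)%:A = a%:A * b%:A :> L.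
Proof. by rewrite -scalerA mulr_algl. Qed.

Lemma algX (a : F) m : (a ^+ m)%:A = (a%:A) ^+ m :> L.
Proof. by elim: m => [|m IH]; rewrite ?expr0 ?scale1r // !exprS algM IH. Qed.

Lemma algV (a : F) : (a^-1)%:A = (a%:A)^-1 :> L.
Proof. exact: (fmorphV (in_alg L)). Qed.

Lemma psi_nz x : x != 0 -> psi x != 0.
Proof. by move=> nx; rewrite mulf_neq0 ?invr_eq0 ?alg_nz ?Nm_neq0 ?expf_neq0. Qed.

Lemma psiM x y : psi (x * y) = psi x * psi y.
Proof. by rewrite /psi NmM algM exprMn invfM mulrACA. Qed.

Lemma psi1 : psi 1 = 1.
Proof. by rewrite /psi Nm1 scale1r expr1n divr1. Qed.

Lemma psiX x m : psi (x ^+ m) = psi x ^+ m.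
Proof. by elim: m => [|m IH]; rewrite ?expr0 ?psi1 // !exprS psiM IH. Qed.

Lemma psi_T x : T x -> T (psi x).
Proof. by case=> m [m0 e]; exists m; split => //; rewrite -psiX e psi1. Qed.

Lemma psi_kbar x : x != 0 -> T (psi x) -> kbar_root n x.
Proof.
move=> nx Tp; split => //; exists (Nm x), (psi x); split; first exact: Nm_neq0.
split => //.
by rewrite /psi mulrC divfK // alg_nz // Nm_neq0.
Qed.

Lemma kbar_psi x : kbar_root n x -> T (psi x).
Proof.
case=> nx [a [z [a0 [[m [m0 zm]] e]]]].
have nN := Nm_neq0 nx.
have Nz : Nm z ^+ m = 1 by rewrite -NmX zm Nm1.
have Nxn : Nm x ^+ n = a ^+ n * Nm z by rewrite -NmX e NmM NmA.
set w := a / Nm x.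
have wn : w ^+ n = (Nm z)^-1.
  rewrite /w exprMn exprVn Nxn invfM mulrA divff ?mul1r //.
  by rewrite expf_neq0.
have ps : psi x = w%:A * z.
  by rewrite /psi e /w algM algV mulrAC.
exists (n * m)%N; split; first by rewrite muln_gt0 dim_gt0.
rewrite ps exprMn -algX exprM wn exprVn Nz invr1 scale1r mul1r.
by rewrite mulnC exprM zm expr1n.
Qed.
End Psi.

Unset Implicit Arguments.
Lemma G_expz (L : fieldType) (G : L -> Prop) : mult_subgroup G ->
  forall x z, G x -> G (x ^ z).
Proof.
case=> [G1 [Gnz [GM GV]]] x z Gx.
have Gn : forall m, G (x ^+ m).
  by elim=> [|m IH]; rewrite ?expr0 // exprS; apply: GM.
case: z => m; first exact: Gn.
by rewrite (_ : x ^ Negz m = (x ^+ m.+1)^-1) //; apply: GV.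
Qed.

Lemma G_prodz (L : fieldType) (G : L -> Prop) (s : seq (L * int)) :
  mult_subgroup G -> (forall p, p \in s -> G p.1) -> G (prodz s).
Proof.
move=> hG; elim: s => [|p s IH] hs; first by rewrite /prodz big_nil; case: hG.
rewrite /prodz big_cons; have [_ [_ [GM _]]] := hG; apply: GM.
  by apply: G_expz => //; apply: hs; rewrite inE eqxx.
by apply: IH => q qs; apply: hs; rewrite inE qs orbT.
Qed.

Theorem lemma2p2 (F : fieldType) (L : fieldExtType F) (n : nat)
  (hn : \dim {: L} = n) (hreg : regular_field L) :
  exists Ft : L -> Prop,
    mult_subgroup Ft /\
    (forall x, is_root_of_unity x -> Ft x) /\
    countable_set Ft /\
    free_mod (@is_root_of_unity L) Ft /\
    (forall x, Ft x -> kbar_root n x -> is_root_of_unity x) /\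
    (forall x, x != 0 -> exists y z, Ft y /\ kbar_root n z /\ x = y * z).
Proof.
subst n.
case: hreg => [[g hg0] [G [hG [GT [Gdec [B [BG [Bspan Bind]]]]]]]].
have hg : injective g by move=> x y; apply: hg0.
have [G1 [Gnz [GM GV]]] := hG.
set T := @is_root_of_unity L.
have hBnz : forall b, B b -> b != 0 by move=> b Bb; apply: Gnz; apply: BG.
have hspan : forall y : L, y != 0 ->
    exists s, (forall p, p \in s -> B p.1) /\ T (y / prodz s).
  move=> y ny; have [y0 [z [Gy0 [Tz ->]]]] := Gdec y ny.
  have [s [Bs e]] := Bspan y0 Gy0.
  exists s; split => //; rewrite mulrAC.
  by move: e; rewrite /prodz => ->; rewrite mul1r.
have hind : forall s : seq (L * int), (forall p, p \in s -> B p.1) ->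
    uniq (map fst s) -> T (prodz s) -> forall p, p \in s -> p.2 = 0.
  move=> s Bs us Ts; apply: Bind => //.
  apply: GT => //; apply: G_prodz => // p ps; apply: BG; exact: Bs.
set v := fun x k => c g B (psi x) k.
have hv_mul : forall x y : L, x != 0 -> y != 0 -> forall k, v (x * y) k = v x k + v y k.
  move=> x y nx ny k; rewrite /v psiM.
  by apply: (c_mul hg hBnz hspan hind); apply: psi_nz.
have hv_supp : forall x, exists N, forall k, (N <= k)%N -> v x k = 0.
  by move=> x; apply: c_supp.
have vT : forall x : L, x != 0 -> T (psi x) <-> forall k, v x k = 0.
  move=> x nx; split; first by move=> Tp k; apply: c_T.
  by move=> h; exact: (c_zero_T hg hBnz hspan (psi_nz nx) h).
have vTT : forall x, T x -> forall k, v x k = 0.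
  by move=> x Tx; apply/vT; [exact: T_nz | exact: psi_T].
set Ft := fun x : L => x != 0 /\ exists s : seq (L * int),
   (forall p, p \in s -> X v p.1) /\ T (x / prodz s).
have Xnz : forall s : seq (L * int), (forall p, p \in s -> X v p.1) ->
    forall p, p \in s -> p.1 != 0.
  by move=> s hs p ps; apply: X_nz; apply: hs.
have Tsub : forall x, T x -> Ft x.
  move=> x Tx; split; first exact: T_nz.
  by exists [::]; split => //; rewrite /prodz big_nil divr1.
exists Ft; split; [|split; [exact: Tsub|split; [|split; [|split]]]].
-
  split; first by apply: Tsub; apply: T1.
  split; first by move=> x [].
  split.
    move=> x y [nx [s [Xs Ts]]] [ny [t [Xt Tt]]]; split; first by rewrite mulf_neq0.
    exists (s ++ t); split.
      by move=> p; rewrite mem_cat => /orP[]; [apply: Xs | apply: Xt].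
    rewrite prodz_cat invfM mulrACA; exact: T_mul.
  move=> x [nx [s [Xs Ts]]]; split; first by rewrite invr_eq0.
  exists [seq (p.1, - p.2) | p <- s]; split.
    by move=> p /mapP[q qs ->]; exact: (Xs q qs).
  rewrite prodz_neg -invfM; exact: T_inv.
-
  by exists g => x y _ _; apply: hg.
-
  exists (X v); split.
    move=> b Xb; split; first exact: (X_nz Xb).
    exists [:: (b, 1)]; split; first by move=> p; rewrite inE => /eqP ->.
    rewrite /prodz big_cons big_nil mulr1 expr1z divff; first exact: T1.
    exact: (X_nz Xb).
  split; first by move=> x [_ h].
  move=> s Xs us Ts p ps.
  have h0 : forall k, \sum_(q <- s) q.2 * v q.1 k = 0.
    by move=> k; rewrite -(v_prodz hv_mul) //; [apply: vTT | apply: Xnz].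
  have := indep_all Xs h0 p.1; rewrite sum_uniq //.
-
  move=> x [nx [s [Xs Ts]]] kx.
  have nP := prodz_nz (Xnz s Xs).
  have vx : forall k, v x k = 0 by apply/vT => //; exact: kbar_psi.
  have h0 : forall k, \sum_(q <- s) q.2 * v q.1 k = 0.
    move=> k; rewrite -(v_prodz hv_mul) //; last exact: Xnz.
    have nz : x / prodz s != 0 by rewrite mulf_neq0 ?invr_eq0.
    have := hv_mul (prodz s) (x / prodz s) nP nz k.
    by rewrite mulrC divfK // vx (vTT _ Ts) addr0 => <-.
  have P1 : prodz s = 1.
    rewrite (prodz_merge (Xnz s Xs)) big1_seq // => y _.
    by rewrite (indep_all Xs h0 y) expr0z.
  by move: Ts; rewrite P1 divr1.
-
  move=> x nx; have [s [Xs hs]] := span_all hv_mul hv_supp nx.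
  have nP := prodz_nz (Xnz s Xs).
  exists (prodz s), (x / prodz s); split.
    split => //; exists s; split => //; rewrite divff //; exact: T1.
  have nz : x / prodz s != 0 by rewrite mulf_neq0 ?invr_eq0.
  split; last by rewrite mulrC divfK.
  apply: psi_kbar => //; apply/vT => // k.
  have := hv_mul (prodz s) (x / prodz s) nP nz k.
  rewrite mulrC divfK // hs (v_prodz hv_mul) //; last exact: Xnz.
  by move=> e; apply: (addrI (\sum_(p <- s) p.2 * v p.1 k)); rewrite addr0 -e.
Qed.
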